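(* Let $p$ be an odd prime and $n\geq 1$ an integer with $p>2n$, and let $G$ be an extraspecial group of order $p^{2n+1}$. Then $\mathrm{Aut}(G)$ contains no element of order $p^2$; that is, every element of $\mathrm{Aut}(G)$ of $p$-power order has order $1$ or $p$. In particular, if $p\geq 5$, no extraspecial group of order $p^5$ has an automorphism of order $p^2$.
   Context: A $p$-group $G$ is extraspecial if $Z(G)=G'=\Phi(G)$ has order $p$. *)

(* Defs.v *)
From mathcomp Require Import all_boot all_fingroup all_solvable.
From mathcomp Require Import pgroup maximal automorphism.
Set Implicit Arguments.
Unset Strict Implicit.
Unset Printing Implicit Defensive.

(* Main.v *)
Require Import Defs.
From mathcomp Require Import all_boot all_fingroup all_solvable.
From mathcomp Require Import pgroup maximal automorphism.
From HB Require Import structures.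
From mathcomp Require Import all_order all_algebra.
Set Implicit Arguments. Unset Strict Implicit. Unset Printing Implicit Defensive.
Import GRing.Theory.

Module RingPart.
Local Open Scope ring_scope.

Section Core.
Variables (B : zmodType) (u : B -> B).
Hypothesis uD : {morph u : x y / x + y}.

Lemma u0 : u 0 = 0.
Proof. by apply: (addrI (u 0)); rewrite -uD !addr0. Qed.

Lemma uMn x n : u (x *+ n) = u x *+ n.
Proof. by elim: n => [|n IH]; rewrite ?u0 // !mulrS uD IH. Qed.

Lemma uN x : u (- x) = - u x.
Proof. by apply/eqP; rewrite -subr_eq0 opprK -uD addNr u0. Qed.

Lemma usum I (r : seq I) P (F : I -> B) :
  u (\sum_(i <- r | P i) F i) = \sum_(i <- r | P i) u (F i).
Proof. exact: (big_morph u uD u0). Qed.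

Lemma iter_uD k : {morph iter k u : x y / x + y}.
Proof. by elim: k => // k IH x y /=; rewrite IH uD. Qed.

Lemma iter_u0 k : iter k u 0 = 0.
Proof. by elim: k => //= k ->; rewrite u0. Qed.

Lemma iter_uN k x : iter k u (- x) = - iter k u x.
Proof. by elim: k => //= k ->; rewrite uN. Qed.

Lemma iter_uMn k x n : iter k u (x *+ n) = iter k u x *+ n.
Proof. by elim: k => //= k ->; rewrite uMn. Qed.

Lemma binom k x : iter k (fun b => b + u b) x =
  \sum_(j < k.+1) iter j u x *+ 'C(k, j).
Proof.
elim: k => [|k IH]; first by rewrite big_ord1.
rewrite [LHS]/= IH usum.
rewrite big_ord_recl [in RHS]big_ord_recl /= !bin0.
rewrite -addrA; congr (_ + _).
under [in RHS]eq_bigr => i _ do rewrite binS mulrnDr.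
rewrite big_split /=; congr (_ + _).
  rewrite [RHS]big_ord_recr /= bin_small // mulr0n addr0.
  by apply: eq_bigr => i _.
by apply: eq_bigr => i _; rewrite uMn.
Qed.

Lemma frob p x : prime p -> (forall y, u y *+ p = 0) ->
  iter p (fun b => b + u b) x = x + iter p u x.
Proof.
move=> pr up; rewrite binom big_ord_recr /= binn mulr1n; congr (_ + _).
case: p pr up => // p pr up.
rewrite big_ord_recl /= bin0 mulr1n big1 ?addr0 // => i _.
have /dvdnP[m ->] : (p.+1 %| 'C(p.+1, (bump 0 i)))%N.
  by apply: prime_dvd_bin => //; rewrite /bump /= add1n ltnS ltn_ord.
by rewrite mulnC mulrnA /bump /= up mul0rn.
Qed.

End Core.

Lemma frobX (B : zmodType) (u : B -> B) p e x : prime p ->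
  {morph u : x y / x + y} -> (forall y, u y *+ p = 0) ->
  iter (p ^ e) (fun b => b + u b) x = x + iter (p ^ e) u x.
Proof.
move=> pr; elim: e u x => [|e IH] u x uD up; first by rewrite expn0.
rewrite expnSr !iterM.
rewrite (@eq_iter _ _ (fun b => b + iter p u b)); last by move=> y; apply: frob.
rewrite IH //; first exact: iter_uD.
move=> y; case: p pr up {IH} => // p _ up.
by rewrite iterS up.
Qed.

Lemma natmul_mod (B : zmodType) (x : B) p m : x *+ p = 0 -> x *+ m = x *+ (m %% p).
Proof.
move=> xp; rewrite {1}(divn_eq m p) mulrnDr mulnC mulrnA xp mul0rn add0r.
by [].
Qed.

Lemma coset_card (B : finZmodType) (H K : {set B}) x p : prime p ->
  (forall a b, a \in H -> b \in H -> a - b \in H) ->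
  (forall a n, a \in H -> a *+ n \in H) ->
  (forall j h, h \in H -> x *+ j + h \in K) ->
  x \notin H -> x *+ p = 0 -> (p * #|H| <= #|K|)%N.
Proof.
move=> pr Hsub HMn HK xH xp.
pose f (jh : 'I_p * B) := x *+ jh.1 + jh.2.
have key : forall (j j' : 'I_p) h h', h \in H -> h' \in H ->
    (j' <= j)%N -> f (j, h) = f (j', h') -> j = j' /\ h = h'.
  move=> j j' h h' Hh Hh' le fe.
  have dH : x *+ (j - j') \in H.
    rewrite mulrnBr //; move: fe; rewrite /f /= => fe.
    have -> : x *+ j = x *+ j' + h' - h by rewrite -fe addrK.
    by rewrite addrAC (addrC (x *+ j')) addrK Hsub.
  have jj : j = j' :> nat.
    apply/eqP; rewrite eqn_leq le andbT leqNgt; apply/negP => lt.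
    have d0 : (0 < j - j')%N by rewrite subn_gt0.
    case: (egcdnP p d0) => km kn E _.
    have g1 : gcdn (j - j') p = 1%N.
      rewrite gcdnC; apply/eqP; rewrite -/(coprime _ _) prime_coprime //.
      by rewrite gtnNdvd //; apply: leq_ltn_trans (leq_subr _ _) (ltn_ord j).
    move: E; rewrite g1 => E.
    have : x *+ (km * (j - j')) \in H by rewrite mulnC mulrnA HMn.
    by rewrite E (natmul_mod _ xp) -modnDml modnMl add0n modn_small ?prime_gt1 // mulr1n (negPf xH).
  have jjo : j = j' by apply: val_inj.
  split=> //; move: fe; rewrite /f /= jjo; exact: addrI.
pose D := setX [set: 'I_p] H.
have inj : {in D &, injective f}.
  case=> j h [j' h']; rewrite !inE /= => Hh Hh' fe.
  case: (leqP j' j) => le.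
    by case: (key _ _ _ _ Hh Hh' le fe) => -> ->.
  by case: (key _ _ _ _ Hh' Hh (ltnW le) (esym fe)) => -> ->.
have : #|f @: D| = (p * #|H|)%N by rewrite (card_in_imset inj) cardsX cardsT card_ord.
move <-; apply: subset_leq_card; apply/subsetP => y /imsetP [[j h]].
by rewrite !inE /= => Hh ->; apply: HK.
Qed.

Section Count.
Variables (B : finZmodType) (u : B -> B) (p N : nat).
Hypotheses (uD : {morph u : x y / x + y}) (pr : prime p)
  (up : forall y, u y *+ p = 0) (nil : forall b, iter N u b = 0).

Definition Mk k := [set iter k u b | b : B].

Lemma MkP k x : reflect (exists b, x = iter k u b) (x \in Mk k).
Proof.
apply: (iffP imsetP) => [[b _ ->]|[b ->]]; first by exists b.
by exists b.
Qed.

Lemma Mk_sub k a b : a \in Mk k -> b \in Mk k -> a - b \in Mk k.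
Proof.
move=> /MkP[a' ->] /MkP[b' ->]; apply/MkP; exists (a' - b').
by rewrite iter_uD // iter_uN.
Qed.

Lemma Mk_add k a b : a \in Mk k -> b \in Mk k -> a + b \in Mk k.
Proof.
move=> /MkP[a' ->] /MkP[b' ->]; apply/MkP; exists (a' + b').
by rewrite iter_uD.
Qed.

Lemma Mk_Mn k a n : a \in Mk k -> a *+ n \in Mk k.
Proof.
move=> /MkP[a' ->]; apply/MkP; exists (a' *+ n); by rewrite iter_uMn.
Qed.

Lemma Mk0 k : 0 \in Mk k.
Proof. apply/MkP; exists 0; by rewrite iter_u0. Qed.

Lemma MkS k x : x \in Mk k.+1 -> x \in Mk k.
Proof. move=> /MkP[b ->]; apply/MkP; exists (u b); by rewrite iterSr. Qed.

Lemma MkSu k x : x \in Mk k -> u x \in Mk k.+1.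
Proof. move=> /MkP[b ->]; apply/MkP; exists b; by rewrite iterS. Qed.

Lemma MkSu' k x : x \in Mk k.+1 -> exists2 y, y \in Mk k & x = u y.
Proof.
move=> /MkP[b ->]; exists (iter k u b) => //; by apply/MkP; exists b.
Qed.

Lemma Mk_p k x : x \in Mk k.+1 -> x *+ p = 0.
Proof. by move=> /MkSu'[y _ ->]. Qed.

Lemma Mk_N k : Mk (k + N) = [set 0].
Proof.
apply/setP => x; rewrite inE; apply/idP/idP => [/MkP[b ->]|/eqP ->].
  by rewrite addnC iterD nil.
exact: Mk0.
Qed.

Lemma strict k : Mk k != [set 0] -> exists2 x, x \in Mk k & x \notin Mk k.+1.
Proof.
move=> nz; apply/exists_inP; rewrite -negb_forall_in; apply/negP => /forall_inP all.
have sub : forall m, Mk k \subset Mk (k + m).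
  elim=> [|m IH]; first by rewrite addn0.
  apply/subsetP => x /all.
  move=> /MkSu'[y yk ->]; rewrite addnS; apply: MkSu.
  exact: (subsetP IH).
move: nz; rewrite eqEsubset (sub1set _ (0 : B)) Mk0 andbT.
by rewrite -(Mk_N k) sub.
Qed.

Lemma step k : Mk k.+1 != [set 0] -> (p * #|Mk k.+2| <= #|Mk k.+1|)%N.
Proof.
move=> /strict [x xk xk1].
apply: (coset_card pr (@Mk_sub _) (@Mk_Mn _)) xk1 (Mk_p xk).
move=> j h /MkS hk; apply: Mk_add => //; exact: Mk_Mn.
Qed.

Lemma chain k : Mk k.+1 = [set 0] \/ (p ^ k * #|Mk k.+1| <= #|Mk 1|)%N.
Proof.
elim: k => [|k [IH|IH]]; first by right; rewrite expn0 mul1n.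
  left; apply/eqP; rewrite eqEsubset sub1set Mk0 andbT -IH.
  by apply/subsetP => x /MkS.
have [->|nz] := eqVneq (Mk k.+2) [set 0]; first by left.
right; apply: leq_trans IH; rewrite expnSr -mulnA leq_pmul2l ?expn_gt0 ?prime_gt0 //.
apply: step; apply: contra nz => /eqP e.
rewrite eqEsubset sub1set Mk0 andbT -e.
by apply/subsetP => x /MkS.
Qed.

Lemma sec_card (Z : {set B}) : (forall z, z \in Z -> u z = 0) ->
  (#|Z| * #|Mk 1| <= #|B|)%N.
Proof.
move=> Zu.
pose s (m : B) := odflt 0 [pick b | u b == m].
have sP : forall m, m \in Mk 1 -> u (s m) = m.
  move=> m /MkP[b ->] /=; rewrite /s; case: pickP => [c /eqP //|/(_ b)].
  by rewrite eqxx.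
pose f (zm : B * B) := zm.1 + s zm.2.
have inj : {in setX Z (Mk 1) &, injective f}.
  case=> z m [z' m']; rewrite !inE /= => /andP[zZ mM] /andP[zZ' mM'] fe.
  have mm : m = m'.
    move: (congr1 u fe); rewrite /f /= !uD (Zu z) // (Zu z') // !add0r !sP //.
  by move: fe; rewrite /f /= mm => /addIr ->.
rewrite -cardsX -(card_in_imset inj); exact: max_card.
Qed.

End Count.

Theorem core (B : finZmodType) (u : B -> B) p m e (Z : {set B}) :
  prime p -> {morph u : x y / x + y} -> (forall y, u y *+ p = 0) ->
  (forall b, iter (p ^ e) (fun b => b + u b) b = b) ->
  (p <= #|Z|)%N -> (forall z, z \in Z -> u z = 0) -> #|B| = (p ^ m.+1)%N -> (m < p)%N ->
  forall b, iter p (fun b => b + u b) b = b.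
Proof.
move=> pr uD up ue pZ Zu cB mp b.
have nil : forall b, iter (p ^ e) u b = 0.
  by move=> c; apply: (addrI c); rewrite -frobX // ue addr0.
have M1 : (#|Mk u 1| <= p ^ m)%N.
  rewrite -(leq_pmul2l (prime_gt0 pr)) -expnS -cB.
  apply: leq_trans (sec_card uD Zu); by rewrite leq_mul2r pZ orbT.
have Mm : Mk u m.+1 = [set 0].
  case: (chain uD pr up nil m) => // H.
  have : (p ^ m * #|Mk u m.+1| <= p ^ m * 1)%N by rewrite muln1; apply: leq_trans H M1.
  rewrite leq_pmul2l ?expn_gt0 ?prime_gt0 // => c1.
  apply/eqP; rewrite eq_sym eqEcard sub1set Mk0 // cards1 c1 //.
rewrite frob //.
have -> : p = ((p - m.+1) + m.+1)%N by rewrite subnK.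
rewrite iterD.
have : iter m.+1 u b \in Mk u m.+1 by apply/MkP; exists b.
by rewrite Mm inE => /eqP ->; rewrite iter_u0 // addr0.
Qed.

End RingPart.
Import RingPart.

Module GroupPart.
Local Open Scope group_scope.

Record cl2 (gT : finGroupType) := CL2 {
  cG : {group gT}; ch : nat;
  cl2Z : forall x y, x \in cG -> y \in cG -> [~ x, y] \in 'Z(cG);
  cl2H : forall x y, x \in cG -> y \in cG -> ([~ x, y] ^+ ch.*2 = [~ x, y])%g }.

Section Cl2Lemmas.
Variables (gT : finGroupType) (D : cl2 gT).
Local Notation G := (cG D).
Local Notation h := (ch D).

Lemma zC z g : z \in 'Z(G) -> g \in G -> commute z g.
Proof. by case/centerP => _ /(_ g) H /H. Qed.

Lemma conjZ z g : z \in 'Z(G) -> g \in G -> z ^ g = z.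
Proof. by move=> zZ gG; apply/conjg_fixP/commgP; apply: zC. Qed.

Lemma commZr x z : x \in G -> z \in 'Z(G) -> [~ x, z] = 1.
Proof. by move=> xG zZ; apply/eqP/commgP/commute_sym; apply: zC. Qed.

Lemma commZl x z : x \in G -> z \in 'Z(G) -> [~ z, x] = 1.
Proof. by move=> xG zZ; apply/eqP/commgP; apply: zC. Qed.

Lemma commMl x y z : x \in G -> y \in G -> z \in G -> [~ x * y, z] = [~ x, z] * [~ y, z].
Proof. by move=> xG yG zG; rewrite commMgJ conjZ ?cl2Z. Qed.

Lemma commMr x y z : x \in G -> y \in G -> z \in G -> [~ x, y * z] = [~ x, y] * [~ x, z].
Proof.
move=> xG yG zG; rewrite commgMJ conjZ ?cl2Z //.
exact: (zC (cl2Z xG zG) (groupR xG yG)).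
Qed.

Lemma ZG z : z \in 'Z(G) -> z \in G.
Proof. exact: (subsetP (center_sub G)). Qed.

End Cl2Lemmas.

Inductive btype gT (D : cl2 gT) := BT (x : gT) of x \in cG D.
Definition bval gT (D : cl2 gT) (b : btype D) := let: BT x _ := b in x.
HB.instance Definition _ gT (D : cl2 gT) := [isSub for @bval gT D].
HB.instance Definition _ gT (D : cl2 gT) := [Finite of btype D by <:].

Section BaerOps.
Variables (gT : finGroupType) (D : cl2 gT).
Local Notation G := (cG D).
Local Notation h := (ch D).
Local Notation B := (btype D).

Lemma bvalP (b : B) : bval b \in G.
Proof. by case: b. Qed.

Definition bop (x y : gT) := (x * y * [~ y, x] ^+ h)%g.

Lemma bopG x y : x \in G -> y \in G -> bop x y \in G.
Proof. by move=> xG yG; rewrite !groupM ?groupX ?groupR. Qed.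

Definition badd (x y : B) : B := BT (bopG (bvalP x) (bvalP y)).
Definition bzero : B := BT (group1 G).
Definition bopp (x : B) : B := BT (groupVr (bvalP x)).

Lemma baddA : associative badd.
Proof.
move=> [x xG] [y yG] [z zG]; apply: val_inj; rewrite /= /bop.
have Zyx : [~ y, x] ^+ h \in 'Z(G) by rewrite groupX ?cl2Z.
have Zzx : [~ z, x] ^+ h \in 'Z(G) by rewrite groupX ?cl2Z.
have Zzy : [~ z, y] ^+ h \in 'Z(G) by rewrite groupX ?cl2Z.
rewrite !(commMl (D:=D)) ?groupM ?(ZG Zzy) ?(commZl xG Zzy) ?mulg1 //.
rewrite !(commMr (D:=D)) ?groupM ?(ZG Zyx) ?(commZr zG Zyx) ?mulg1 //.
rewrite (expgMn _ (zC (cl2Z yG xG) (groupR zG xG))).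
rewrite (expgMn _ (zC (cl2Z zG xG) (groupR zG yG))).
move: Zyx Zzx Zzy; set a := _ ^+ h; set b := _ ^+ h; set c := _ ^+ h => Za Zb Zc.
rewrite -[in RHS](mulgA (x * y) a z) (zC Za zG) !mulgA -!mulgA.
do 3 congr (_ * _); rewrite [RHS]mulgA.
exact: zC Zc (groupM (ZG Za) (ZG Zb)).
Qed.

Lemma baddC : commutative badd.
Proof.
move=> [x xG] [y yG]; apply: val_inj; rewrite /= /bop.
rewrite [x * y]commgC -mulgA; congr (_ * _).
by rewrite -(invg_comm x y) expgVn -{1}(cl2H xG yG) -addnn expgD mulgK.
Qed.

Lemma badd0 : left_id bzero badd.
Proof.
move=> [x xG]; apply: val_inj; by rewrite /= /bop mul1g commg1 expg1n !mulg1.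
Qed.

Lemma baddN : left_inverse bzero bopp badd.
Proof.
move=> [x xG]; apply: val_inj; by rewrite /= /bop mulVg commgVg expg1n mulg1.
Qed.

HB.instance Definition _ := GRing.isZmodule.Build B baddA baddC badd0 baddN.

End BaerOps.

Lemma cardZp (gT : finGroupType) (G : {group gT}) (p : nat) :
  p.-group G -> prime #|'Z(G)| -> #|'Z(G)| = p.
Proof.
move=> pG prZ.
have Zp : p.-nat #|'Z(G)| := pgroupS (center_sub G) pG.
have : #|'Z(G)| \in \pi(#|'Z(G)|) by rewrite mem_primes prZ cardG_gt0 dvdnn.
by move/(pnatPpi Zp); rewrite inE => /eqP.
Qed.

Lemma Aut_center (gT : finGroupType) (G : {group gT}) a y :
  a \in Aut G -> y \in 'Z(G) -> a y \in 'Z(G).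
Proof.
move=> AutGa yZ.
case/charP: (center_char G) => _ /(_ (autm AutGa) (injm_autm AutGa) (im_autm AutGa)) E.
rewrite -(autmE AutGa) -E; apply: mem_morphim => //.
exact: (subsetP (center_sub G)).
Qed.

Lemma aut_fixZ (gT : finGroupType) (G : {group gT}) (p : nat) a z :
  prime p -> #|'Z(G)| = p -> a \in Aut G -> p.-elt a -> z \in 'Z(G) -> a z = z.
Proof.
move=> pr cZ AutGa pa zZ.
have nZ : a \in 'N('Z(G) | 'P).
  apply/astabsP => x /=; apply/idP/idP => [axZ|]; last exact: Aut_center.
  have := Aut_center (groupVr AutGa) axZ.
  by rewrite -permM mulgV perm1.
pose r := restr_perm 'Z(G) a.
have AutZr : r \in Aut 'Z(G) := Aut_restr_perm (center_sub G) AutGa.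
have d1 : (#[r] %| p.-1)%N.
  rewrite -totient_prime // -cZ -card_Aut_cyclic ?prime_cyclic ?cZ //.
  exact: order_dvdG.
have d2 : (#[r] %| #[a])%N.
  rewrite order_dvdn /r -morphX //= expg_order.
  by rewrite morph1.
have [k ek] := p_natP pa.
have cop : coprime #[a] p.-1.
  rewrite ek coprimeXl // prime_coprime // gtnNdvd //.
    by rewrite -subn1 subn_gt0 prime_gt1.
  by rewrite prednK ?prime_gt0.
have : (#[r] %| 1)%N by rewrite -(eqP cop) dvdn_gcd d2 d1.
rewrite dvdn1 order_eq1 => /eqP r1.
by rewrite -(restr_permE nZ zZ) -/r r1 perm1.
Qed.

Lemma main_pow (gT : finGroupType) (G : {group gT}) (p n : nat) (a : {perm gT}) :
  prime p -> odd p -> (2 * n < p)%N -> p.-group G -> extraspecial G ->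
  #|G| = (p ^ (2 * n + 1))%N -> a \in Aut G -> p.-elt a -> a ^+ p = 1.
Proof.
move=> pr op np pG [[PhiZ derZ] prZ] cardG AutGa pa.
have cZ := cardZp pG prZ.
pose h := p.+1./2.
have HZ : forall x y, x \in G -> y \in G -> [~ x, y] \in 'Z(G).
  by move=> x y xG yG; rewrite -derZ derg1 mem_commg.
have HH : forall x y, x \in G -> y \in G -> [~ x, y] ^+ h.*2 = [~ x, y].
  move=> x y xG yG; rewrite /h halfK oddS op /= subn0 expgS.
  by rewrite -cZ expg_cardG ?mulg1 ?HZ.
pose D := @CL2 gT G h HZ HH.
pose B := btype D.
pose Ab (b : B) : B := BT (Aut_closed AutGa (bvalP b) : a (bval b) \in cG D).
have valAb : forall b, val (Ab b) = a (val b) by [].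
have AbD : forall x y, Ab (x + y)%R = (Ab x + Ab y)%R.
  move=> [x xG] [y yG]; apply: val_inj; rewrite /= /bop.
  rewrite -(autmE AutGa) !morphM ?morphX ?morphR ?groupM ?groupX ?groupR ?groupV //.
pose u (b : B) := (Ab b - b)%R.
have uD : {morph u : x y / (x + y)%R}.
  by move=> x y; rewrite /u AbD opprD addrACA.
have valMn : forall (b : B) k, val (b *+ k)%R = val b ^+ k.
  move=> b; elim=> [|k IH] //; rewrite GRing.mulrS /= IH /bop.
  have /commgP/eqP -> : commute (val b ^+ k) (val b).
    exact/commute_sym/commuteX.
  by rewrite expg1n mulg1 -expgS.
have fixZ : forall z, z \in 'Z(G) -> a z = z.
  by move=> z zZ; apply: (aut_fixZ pr cZ AutGa pa zZ).
have up : forall y, (u y *+ p)%R = 0%R.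
  move=> y; rewrite -(uMn uD) /u; apply/eqP; rewrite GRing.subr_eq0; apply/eqP.
  apply: val_inj; rewrite valAb valMn fixZ // -PhiZ (Phi_joing pG).
  apply: (subsetP (joing_subr _ _)).
  by rewrite -[p]expn1 Mho_p_elt ?bvalP // (mem_p_elt pG (bvalP y)).
have AE : forall b, (b + u b)%R = Ab b by move=> b; rewrite /u GRing.subrKC.
have iterA : forall k b, val (iter k Ab b) = iter k a (val b).
  by move=> k b; elim: k => //= k <-.
have [k ek] := p_natP pa.
have ue : forall b, iter (p ^ k) (fun b => b + u b)%R b = b.
  move=> b; rewrite (eq_iter AE); apply: val_inj; rewrite iterA -permX -ek.
  by rewrite expg_order perm1.
have ZG' : forall z, z \in 'Z(G) -> z \in G := subsetP (center_sub G).
pose Zb := [set (insubd (0%R : B) z) | z in 'Z(G)].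
have cZb : #|Zb| = p.
  rewrite -cZ card_in_imset // => z1 z2 z1Z z2Z e.
  by move/(congr1 val): e; rewrite !insubdK //; apply: ZG'.
have Zu : forall z, z \in Zb -> u z = 0%R.
  move=> _ /imsetP[z zZ ->]; apply/eqP; rewrite /u GRing.subr_eq0; apply/eqP.
  by apply: val_inj; rewrite valAb insubdK ?(ZG' _ zZ) // fixZ.
have cB : #|(btype D : finZmodType)| = (p ^ (2 * n).+1)%N.
  by rewrite card_sub -addn1 -cardG.
have main := core pr uD up ue (eq_leq (esym cZb)) Zu cB np.
apply/permP => x; rewrite perm1.
case xG : (x \in G); last by apply: permX_fix; apply: (out_Aut AutGa); rewrite xG.
have := main (BT (xG : x \in cG D)).
rewrite (eq_iter AE) => /(congr1 val); rewrite iterA /= => E.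
by rewrite permX E.
Qed.

End GroupPart.
Import GroupPart.


Theorem theorem3p3 (gT : finGroupType) (G : {group gT}) (p n : nat) :
  prime p -> odd p -> 1 <= n -> 2 * n < p ->
  pgroup p G -> extraspecial G -> #|G| = (p ^ (2 * n + 1))%N ->
  (forall a : {perm gT}, a \in Aut G -> #[a]%g <> (p ^ 2)%N) /\
  (forall a : {perm gT}, a \in Aut G -> p_elt p a -> #[a]%g = 1%N \/ #[a]%g = p).
Proof.
move=> pr op n1 np pG ext cardG.
have key := fun a AutGa pa => @main_pow gT G p n a pr op np pG ext cardG AutGa pa.
split.
  move=> a AutGa oa.
  have pa : p_elt p a by rewrite /p_elt oa pnatX pnat_id.
  have := key a AutGa pa; move/eqP; rewrite -order_dvdn oa => d.
  have : p ^ 2 <= p ^ 1 by rewrite expn1; exact: dvdn_leq (prime_gt0 pr) d.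
  by rewrite leq_exp2l //; exact: prime_gt1.
move=> a AutGa pa.
have d : #[a]%g %| p by rewrite order_dvdn; apply/eqP; apply: key.
case/primeP: pr => _ /(_ _ d) /orP[] /eqP; by [left | right].
Qed.
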